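(* Let $k,k'\ge1$ be integers. For $X\in\mathcal{P}$ let $\mathcal{C}^{-1}(X)=\{(P,Q)\in\mathcal{P}^2:[P,Q]\in\{2iX,-2iX\}\}$ and $\mathcal{S}_X=\mathcal{C}^{-1}(X)\cap(\mathcal{P}_k\times\mathcal{P}_{k'})$. For $(P,Q)\in\mathcal{S}_X$ define its type as $(|\mathrm{supp}(P)|,|\mathrm{supp}(P)\cap\mathrm{supp}(Q)|)$, and let $\mathcal{S}_X[j,l]$ be the set of elements of $\mathcal{S}_X$ of type $(j,l)$. Then: (a) for every $X\in\mathcal{P}$ there are at most $k^2$ distinct types among elements of $\mathcal{S}_X$; (b) if $(P,Q),(P',Q')\in\mathcal{S}_X[j,l]$, then $\mathrm{supp}(P)\cap\mathrm{supp}(Q')\neq\varnothing$.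
   Context: $\mathcal{P}$ denotes the set of $n$-fold tensor products of Pauli matrices $\{I,\sigma_x,\sigma_y,\sigma_z\}$; $\mathrm{supp}(P)\subseteq[n]$ is the set of qubits on which $P$ acts non-trivially; $\mathcal{P}_j$ is the set of Paulis with $|\mathrm{supp}|\le j$. $[A,B]=AB-BA$. *)

(* Defs.v *)
(* n-qubit operators are complex 2^n x 2^n matrices over algC,
   indexed by computational basis states {ffun 'I_n -> 'I_2}. *)
From mathcomp Require Import all_boot all_order all_algebra all_field.
Set Implicit Arguments. Unset Strict Implicit. Unset Printing Implicit Defensive.
Import Order.TTheory GRing.Theory Num.Theory.
Local Open Scope ring_scope.

(* single-qubit Pauli labels: 0 = I, 1 = sigma_x, 2 = sigma_y, 3 = sigma_z *)
Definition sigma (a : 'I_4) (r c : 'I_2) : algC :=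
  match val a, val r, val c with
  | 0, 0, 0 => 1 | 0, 1, 1 => 1
  | 1, 0, 1 => 1 | 1, 1, 0 => 1
  | 2, 0, 1 => - 'i | 2, 1, 0 => 'i
  | 3, 0, 0 => 1 | 3, 1, 1 => -1
  | _, _, _ => 0
  end.

(* an n-fold tensor product of Pauli matrices (element of the set P) *)
Definition pauli (n : nat) := {ffun 'I_n -> 'I_4}.

Definition basis (n : nat) := {ffun 'I_n -> 'I_2}.
Definition dim (n : nat) := #|{: basis n}|.
Definition bidx (n : nat) (a : 'I_(dim n)) : basis n := enum_val a.

Definition pmat (n : nat) (P : pauli n) : 'M[algC]_(dim n) :=
  \matrix_(a, b) \prod_(i < n) sigma (P i) (bidx a i) (bidx b i).

Definition commutator (N : nat) (A B : 'M[algC]_N) : 'M[algC]_N := A *m B - B *m A.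

Definition supp (n : nat) (P : pauli n) : {set 'I_n} := [set i | P i != 0%R].

Definition Cinv (n : nat) (X P Q : pauli n) : Prop :=
  commutator (pmat P) (pmat Q) = (2%:R * 'i) *: pmat X \/
  commutator (pmat P) (pmat Q) = - (2%:R * 'i) *: pmat X.

Definition SX (n k k' : nat) (X P Q : pauli n) : Prop :=
  Cinv X P Q /\ (#|supp P| <= k)%N /\ (#|supp Q| <= k')%N.

Definition ptype (n : nat) (P Q : pauli n) : nat * nat :=
  (#|supp P|, #|supp P :&: supp Q|).

(* Main.v *)
Require Import Defs.
From mathcomp Require Import all_boot all_order all_algebra all_field.
From mathcomp Require Import zify.
Import Order.TTheory GRing.Theory Num.Theory.

Module Helpers.
Set Implicit Arguments. Unset Strict Implicit. Unset Printing Implicit Defensive.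
Local Open Scope ring_scope.
Definition pmn (p q : nat) : nat :=
  match p, q with
  | 0, x => x | x, 0 => x
  | 1, 2 => 3 | 2, 1 => 3 | 1, 3 => 2 | 3, 1 => 2 | 2, 3 => 1 | 3, 2 => 1
  | _, _ => 0 end.
Lemma pmn_lt (p q : 'I_4) : (pmn p q < 4)%N.
Proof. by case: p => [[|[|[|[|?]]]] //] ; case: q => [[|[|[|[|?]]]] //]. Qed.
Definition pm (p q : 'I_4) : 'I_4 := Ordinal (pmn_lt p q).
Definition om (p q : 'I_4) : algC :=
  match val p, val q with
  | 1, 2 => 'i | 2, 1 => -'i | 2, 3 => 'i | 3, 2 => -'i | 3, 1 => 'i | 1, 3 => -'i
  | _, _ => 1 end.
Definition ac (p q : 'I_4) : bool := [&& p != 0, q != 0 & p != q].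

Lemma sig_mul (p q : 'I_4) (r c : 'I_2) :
  \sum_(m < 2) sigma p r m * sigma q m c = om p q * sigma (pm p q) r c.
Proof.
rewrite !big_ord_recr big_ord0 /= add0r.
case: p => [[|[|[|[|?]]]] //] ; case: q => [[|[|[|[|?]]]] //];
case: r => [[|[|?]] //] ; case: c => [[|[|?]] //] ? ? ? ?;
rewrite /sigma /om /pm /= ?(mulrN, mulNr, mulr1, mul1r, mulr0, mul0r, addr0, add0r, opprK, mulCii, oppr0, subr0) //.
Qed.

Ltac c4 p := case: p => [[|[|[|[|?]]]] //] ?.

Lemma pm_comm p q : pm q p = pm p q.
Proof. by apply: val_inj; c4 p; c4 q. Qed.
Lemma pm_p0 p : pm p 0 = p.
Proof. by apply: val_inj; c4 p. Qed.
Lemma pm_eq0 p q : (pm p q == 0) = (p == q).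
Proof. by c4 p; c4 q. Qed.
Lemma om_comm p q : om q p = if ac p q then - om p q else om p q.
Proof. by c4 p; c4 q; rewrite /om /ac /= ?opprK. Qed.
Lemma om_pp p : om p p = 1.
Proof. by c4 p. Qed.
Lemma om_neq0 p q : om p q != 0.
Proof. by c4 p; c4 q; rewrite /om /= ?oppr_eq0 ?neq0Ci ?oner_eq0. Qed.

Definition flip (p : 'I_4) : bool := (val p == 1%N) || (val p == 2%N).
Lemma sig_flip p : sigma p 0 (if flip p then 1 else 0) != 0.
Proof. by c4 p; rewrite /sigma /= ?oppr_eq0 ?neq0Ci ?oner_eq0. Qed.
Lemma sig_nflip00 p : ~~ flip p -> sigma p 0 0 = 1.
Proof. by c4 p. Qed.
Lemma sig_nflip11 p : ~~ flip p -> p != 0 -> sigma p 1 1 = -1.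
Proof. by c4 p. Qed.
Lemma sig0_diag r : sigma 0 r r = 1.
Proof. by case: r => [[|[|?]] //] ?. Qed.
Lemma sig0_01 : sigma 0 0 1 = 0.
Proof. by []. Qed.
Lemma pmatE n (P : pauli n) (v w : basis n) :
  pmat P (enum_rank v) (enum_rank w) = \prod_i sigma (P i) (v i) (w i).
Proof. by rewrite /pmat mxE /bidx !enum_rankK. Qed.

Definition ppm n (P Q : pauli n) : pauli n := [ffun i => pm (P i) (Q i)].

Lemma pmat_mul n (P Q : pauli n) :
  pmat P *m pmat Q = (\prod_i om (P i) (Q i)) *: pmat (ppm P Q).
Proof.
apply/matrixP => a b; rewrite [LHS]mxE [RHS]mxE /pmat [X in _ * X]mxE.

under [LHS]eq_bigr => c _.
  rewrite mxE. rewrite mxE. rewrite -big_split /=.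
  over.
rewrite -(big_enum_val (fun v : basis n => \prod_i (sigma (P i) (bidx a i) (v i) * sigma (Q i) (v i) (bidx b i)))).
rewrite (eq_bigl xpredT) //.
rewrite -(bigA_distr_bigA (fun (i : 'I_n) (m : 'I_2) => sigma (P i) (bidx a i) m * sigma (Q i) m (bidx b i))) /=.
under eq_bigr do rewrite sig_mul.
by rewrite big_split /=; congr (_ * _); apply: eq_bigr => i _; rewrite ffunE.
Qed.

Lemma notscalar n (Y Z : pauli n) (d e : algC) :
  (exists i, Y i != 0) -> (forall i, Z i = 0) -> d *: pmat Y = e *: pmat Z -> e = 0.
Proof.
move=> [i Yi] Z0 H.
have E (v w : basis n) : d * \prod_i sigma (Y i) (v i) (w i) = e * \prod_i sigma (Z i) (v i) (w i).
  move/matrixP: H => H; have H1 := H (enum_rank v) (enum_rank w). rewrite mxE in H1. rewrite [X in _ = X]mxE in H1. by rewrite !pmatE in H1.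
pose v0 : basis n := [ffun _ => 0].
have D0 : \prod_i sigma (Z i) (v0 i) (v0 i) = 1.
  by apply: big1 => j _; rewrite Z0 sig0_diag.
case: (boolP [exists j, flip (Y j)]) => [/existsP [j Fj] | /existsPn NF].
  pose w1 : basis n := [ffun j => if flip (Y j) then 1 else 0].
  have := E v0 w1; rewrite (bigD1 j) //= [in X in _ = _ * X](bigD1 j) //= Z0 /v0 /w1 !ffunE Fj sig0_01 mul0r mulr0.
  move/eqP; rewrite mulf_eq0 => /orP [/eqP d0|].
    by have := E v0 v0; rewrite D0 d0 mul0r mulr1.
  rewrite mulf_eq0 => /orP [|].
    by have := sig_flip (Y j); rewrite Fj => /negbTE ->.
  rewrite prodf_seq_eq0 => /hasP [k _ /andP [_]].
  by rewrite !ffunE; have := sig_flip (Y k) => /negbTE ->.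
have e1 : d = e.
  have := E v0 v0; rewrite D0 mulr1 big1 ?mulr1 // => j _.
  by rewrite /v0 ffunE sig_nflip00 ?NF.
pose w2 : basis n := [ffun j => if j == i then 1 else 0].
have := E w2 w2; rewrite [X in _ = _ * X]big1; last by move=> j _; rewrite Z0 sig0_diag.
rewrite (bigD1 i) //= big1; last first.
  by move=> j /negbTE ji; rewrite /w2 ffunE ji sig_nflip00 ?NF.
rewrite /w2 ffunE eqxx sig_nflip11 ?NF // mulr1 mulr1 mulrN1 e1 => /eqP.
by rewrite eq_sym -addr_eq0 -mulr2n mulrn_eq0 /= => /eqP.
Qed.

Lemma ppm_comm n (P Q : pauli n) : ppm Q P = ppm P Q.
Proof. by apply/ffunP => i; rewrite !ffunE pm_comm. Qed.

Lemma pmat_sq n (X : pauli n) : pmat X *m pmat X = pmat (ppm X X).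
Proof.
rewrite pmat_mul big1 ?scale1r // => i _; exact: om_pp.
Qed.

Lemma ppm_sq0 n (X : pauli n) i : ppm X X i = 0.
Proof. by rewrite ffunE; apply/eqP; rewrite pm_eq0. Qed.

Lemma key_facts n (X P Q : pauli n) : Cinv X P Q ->
  (exists i, ac (P i) (Q i)) /\ (forall i, X i = pm (P i) (Q i)).
Proof.
move=> HC.
have hc : commutator (pmat P) (pmat Q) =
   (\prod_i om (P i) (Q i) - \prod_i om (Q i) (P i)) *: pmat (ppm P Q).
  by rewrite /commutator !pmat_mul ppm_comm scalerBl.
have [e [e0 He]] : exists e, e != 0 /\ commutator (pmat P) (pmat Q) = e *: pmat X.
  have h2 : (2%:R * 'i : algC) != 0 by rewrite mulf_neq0 ?neq0Ci ?pnatr_eq0.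
  case: HC => H; [exists (2%:R * 'i) | exists (- (2%:R * 'i))]; split => //.
  by rewrite oppr_eq0.
have HX : forall c (Y : pauli n), c *: pmat Y = e *: pmat X ->
    (c * \prod_i om (Y i) (X i)) *: pmat (ppm Y X) = e *: pmat (ppm X X).
  move=> c Y H; by rewrite -scalerA -pmat_mul scalemxAl H -scalemxAl pmat_sq.
split.
  case: (boolP [exists i, ac (P i) (Q i)]) => [/existsP //| /existsPn NA].
  exfalso; move/negP: e0; apply.
  have : 0 *: pmat (ppm P Q) = e *: pmat X.
    rewrite -He hc; congr (_ *: _); apply/esym/eqP; rewrite subr_eq0; apply/eqP.
    by apply: eq_bigr => i _; rewrite [RHS]om_comm (negbTE (NA i)).
  move/HX; rewrite mul0r scale0r.
  move/matrixP => /(_ (enum_rank [ffun _ => 0 : 'I_2]) (enum_rank [ffun _ => 0 : 'I_2])).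
  rewrite mxE [X in _ = X]mxE pmatE big1 ?mulr1 => [<-|i _]; rewrite ?eqxx // ppm_sq0; exact: sig0_diag.
move=> i; apply/eqP; rewrite eq_sym -pm_eq0; apply/negPn/negP => Hi.
have H3 := HX _ _ (etrans (esym hc) He).
have : e = 0.
  apply: (notscalar _ _ H3); last exact: ppm_sq0.
  by exists i; rewrite !ffunE.
by move/eqP; rewrite (negbTE e0).
Qed.
End Helpers.
Import Helpers.

Theorem lemma3p8 (n k k' : nat) (hk : (1 <= k)%N) (hk' : (1 <= k')%N) :
  (* (a) at most k^2 distinct types *)
  (forall (X : pauli n) (s : seq (nat * nat)),
     uniq s ->
     (forall t, t \in s -> exists P Q : pauli n, SX k k' X P Q /\ ptype P Q = t) ->
     (size s <= k ^ 2)%N) /\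
  (* (b) *)
  (forall (X : pauli n) (j l : nat) (P Q P' Q' : pauli n),
     SX k k' X P Q -> SX k k' X P' Q' ->
     ptype P Q = (j, l) -> ptype P' Q' = (j, l) ->
     supp P :&: supp Q' != set0).
Proof.
split.
  move=> X s us Hs.
  have -> : (k ^ 2 = size [seq (x, y) | x <- iota 1 k, y <- iota 1 k])%N.
    by rewrite size_allpairs size_iota mulnn.
  apply: uniq_leq_size => // t /Hs [P [Q [[HC [HP HQ]] <-]]].
  have [[i Hi] _] := key_facts HC.
  have iAB : i \in supp P :&: supp Q.
    by move: Hi; rewrite /ac !inE => /and3P [-> -> _].
  have c1 : (0 < #|supp P :&: supp Q|)%N by apply/card_gt0P; exists i.
  have c2 : (#|supp P :&: supp Q| <= #|supp P|)%N by apply/subset_leq_card/subsetIl.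
  rewrite /ptype; apply: allpairs_f; rewrite mem_iota; lia.
move=> X j l P Q P' Q' [HC [_ _]] [HC' [_ _]] [E1 E2] [E1' E2'].
have [[i Hi] hX] := key_facts HC.
have [_ hX'] := key_facts HC'.
set A := supp P; set B := supp Q; set A' := supp P'; set B' := supp Q'.
apply/negP => /eqP D.
have nB' : forall x, x \in A -> Q' x = 0%R.
  move=> x xA; case: (eqVneq (Q' x) 0%R) => // xB; exfalso.
  have : x \in A :&: B' by rewrite inE xA /B' /supp inE xB.
  by rewrite D inE.
have F1 : forall x, x \in A -> P' x = X x.
  by move=> x xA; rewrite hX' nB' // pm_p0.
pose Z := [set x in A | X x == 0%R].
have F2 : A :&: A' = A :\: Z.
  apply/setP => x; rewrite !inE; case: (eqVneq (P x) 0%R) => //= Px.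
  by rewrite F1 ?inE ?Px ?andbT.
have F3 : Z \subset A :&: B.
  apply/subsetP => x; rewrite !inE => /andP [xA].
  rewrite hX pm_eq0 => /eqP PQ. by rewrite -PQ xA.
have F4 : A' :&: B' \subset A' :\: A.
  apply/subsetP => x; rewrite !inE => /andP [xA' xB']; rewrite xA' andbT.
  apply/negP => xA; have : x \in A :&: B' by rewrite !inE xA xB'.
  by rewrite D inE.
have c1 := cardsID A A'.
have c2 := cardsID Z A.
have ZA : A :&: Z = Z by apply/setIidPr/subsetP => x; rewrite inE => /andP [].
rewrite ZA -F2 setIC in c2.
have c3 := subset_leq_card F3.
have c4 := subset_leq_card F4.
have EZ : Z = A :&: B.
  apply/eqP; rewrite eqEcard F3 /=.
  have h1 : #|A' :\: A| = #|Z|.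
    by apply/eqP; rewrite -(eqn_add2l #|A' :&: A|) c1 [X in _ == X]addnC c2 E1 E1'.
  by rewrite E2 -E2' -h1.
have : i \in Z.
  by rewrite EZ; move: Hi; rewrite /ac !inE => /and3P [-> -> _].
rewrite inE hX pm_eq0 => /andP [_ /eqP PQ].
by move: Hi; rewrite /ac PQ eqxx !andbF.
Qed.
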